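(* Let $X$ be a discrete random variable with exactly $K\ge1$ mass points in $[0,1]$ and let $L>K$ be an integer. Then \[ \sum_{k=1}^{2L-2}\bigl(\mathbb E[\tilde T_k(X)]\bigr)^2\ \ge\ \frac{L-K}{4L}. \]
   Context: $\tilde T_k(x)=\cos(k\arccos(2x-1))$, $x\in[0,1]$, is the shifted Chebyshev polynomial of the first kind of degree $k$. *)

(* Defs.v *)
From Stdlib Require Import Reals.
Open Scope R_scope.

Definition shiftedCheb (k : nat) (x : R) : R := cos (INR k * acos (2 * x - 1)).

Fixpoint rsum (n : nat) (f : nat -> R) : R :=
  match n with
  | O => 0
  | S m => rsum m f + f m
  end.

Definition expect (K : nat) (x w : nat -> R) (g : R -> R) : R :=
  rsum K (fun i => w i * g (x i)).

(* Main.v *)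
Require Import Defs.
From Stdlib Require Import Reals.
From Stdlib Require Import Lra Lia Psatz.
Open Scope R_scope.

Lemma rsum_S n f : rsum (S n) f = rsum n f + f n.
Proof. reflexivity. Qed.

Lemma rsum_ext n f g : (forall i, (i < n)%nat -> f i = g i) -> rsum n f = rsum n g.
Proof.
  induction n; intros H; simpl; auto.
  rewrite IHn by (intros; apply H; lia). rewrite H by lia. reflexivity.
Qed.

Lemma rsum_plus n f g : rsum n (fun i => f i + g i) = rsum n f + rsum n g.
Proof. induction n; simpl; [ring| rewrite IHn; ring]. Qed.

Lemma rsum_scal n c f : rsum n (fun i => c * f i) = c * rsum n f.
Proof. induction n; simpl; [ring| rewrite IHn; ring]. Qed.

Lemma rsum_scalr n c f : rsum n (fun i => f i * c) = rsum n f * c.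
Proof. induction n; simpl; [ring| rewrite IHn; ring]. Qed.

Lemma rsum_const n c : rsum n (fun _ => c) = INR n * c.
Proof. induction n; simpl rsum; [simpl; ring| rewrite IHn, S_INR; ring]. Qed.

Lemma rsum_swap n m F :
  rsum n (fun i => rsum m (fun j => F i j)) = rsum m (fun j => rsum n (fun i => F i j)).
Proof.
  induction n; simpl.
  - induction m; simpl; [reflexivity| rewrite <- IHm; ring].
  - rewrite IHn. rewrite <- rsum_plus. reflexivity.
Qed.

Lemma rsum_nonneg n f : (forall i, (i < n)%nat -> 0 <= f i) -> 0 <= rsum n f.
Proof.
  induction n; intros H; simpl; [lra|].
  assert (0 <= rsum n f) by (apply IHn; intros; apply H; lia).
  assert (0 <= f n) by (apply H; lia). lra.
Qed.

Lemma rsum_le n f g : (forall i, (i < n)%nat -> f i <= g i) -> rsum n f <= rsum n g.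
Proof.
  induction n; intros H; simpl; [lra|].
  assert (rsum n f <= rsum n g) by (apply IHn; intros; apply H; lia).
  assert (f n <= g n) by (apply H; lia). lra.
Qed.

Lemma rsum_term n f i : (forall j, (j < n)%nat -> 0 <= f j) -> (i < n)%nat -> f i <= rsum n f.
Proof.
  induction n; intros H Hi; [lia|]. simpl.
  destruct (Nat.eq_dec i n) as [->|Hne].
  - assert (0 <= rsum n f) by (apply rsum_nonneg; intros; apply H; lia). lra.
  - assert (f i <= rsum n f) by (apply IHn; [intros; apply H; lia| lia]).
    assert (0 <= f n) by (apply H; lia). lra.
Qed.

Lemma rsum_sq n a : (rsum n a) ^ 2 = rsum n (fun i => rsum n (fun j => a i * a j)).
Proof.
  replace ((rsum n a)^2) with (rsum n a * rsum n a) by ring.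
  rewrite <- rsum_scalr. apply rsum_ext; intros i _.
  rewrite rsum_scal. ring.
Qed.

Lemma rsum_shift n h : rsum (S n) h = h 0%nat + rsum n (fun k => h (S k)).
Proof.
  induction n.
  - simpl; ring.
  - rewrite rsum_S, IHn, rsum_S. ring.
Qed.

Lemma rsum_rev n g : rsum n (fun j => g (n - j)%nat) = rsum n (fun k => g (S k)).
Proof.
  revert g; induction n; intros g; [reflexivity|].
  rewrite rsum_S.
  rewrite (rsum_ext n (fun j => g (S n - j)%nat) (fun j => (fun k => g (S k)) (n - j)%nat)).
  2:{ intros i Hi. f_equal. lia. }
  rewrite (IHn (fun k => g (S k))). rewrite (rsum_shift n (fun k => g (S k))).
  replace (S n - n)%nat with 1%nat by lia. ring.
Qed.

Lemma cs n a : (0 < n)%nat -> (rsum n a) ^ 2 <= INR n * rsum n (fun i => a i ^ 2).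
Proof.
  intros Hn.
  set (s := rsum n a). set (Q := rsum n (fun i => a i ^ 2)).
  assert (Hnr : 0 < INR n) by (apply lt_0_INR; lia).
  set (c := s / INR n).
  assert (H0 : 0 <= rsum n (fun i => (a i - c) ^ 2)) by (apply rsum_nonneg; intros; apply pow2_ge_0).
  rewrite (rsum_ext n _ (fun i => a i ^ 2 + ((-2 * c) * a i + c ^ 2))) in H0 by (intros; ring).
  rewrite !rsum_plus, rsum_scal, rsum_const in H0. fold s Q in H0.
  unfold c in H0.
  assert (E : - 2 * (s / INR n) * s + INR n * (s / INR n) ^ 2 = - (s ^ 2 / INR n)) by (field; lra).
  assert (0 <= Q - s^2 / INR n) by lra.
  assert (H2 : s ^ 2 / INR n <= Q) by lra.
  apply (Rmult_le_compat_l (INR n)) in H2; [|lra].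
  replace (INR n * (s ^ 2 / INR n)) with (s^2) in H2 by (field; lra). exact H2.
Qed.

Definition dd (j l : nat) : nat := (j - l + (l - j))%nat.

Lemma cosd j l t : cos (INR (dd j l) * t) =
  cos (INR j * t) * cos (INR l * t) + sin (INR j * t) * sin (INR l * t).
Proof.
  unfold dd. destruct (Nat.le_gt_cases j l) as [H|H].
  - replace (j - l + (l - j))%nat with (l - j)%nat by lia.
    rewrite minus_INR by lia.
    replace ((INR l - INR j) * t) with (INR l * t - INR j * t) by ring.
    rewrite cos_minus. ring.
  - replace (j - l + (l - j))%nat with (j - l)%nat by lia.
    rewrite minus_INR by lia.
    replace ((INR j - INR l) * t) with (INR j * t - INR l * t) by ring.
    rewrite cos_minus. ring.
Qed.

Lemma upper n f : (forall k, 0 <= f k) ->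
  rsum n (fun j => rsum n (fun l => f (dd j l))) <= INR n * (2 * rsum n f - f 0%nat).
Proof.
  intros Hf. induction n.
  - simpl. lra.
  - assert (E : rsum (S n) (fun j => rsum (S n) (fun l => f (dd j l))) =
      rsum n (fun j => rsum n (fun l => f (dd j l))) + rsum n (fun j => f (dd j n))
      + rsum n (fun l => f (dd n l)) + f (dd n n)).
    { simpl. rewrite rsum_plus. ring. }
    rewrite E.
    assert (E1 : rsum n (fun j => f (dd j n)) = rsum n (fun k => f (S k))).
    { rewrite <- rsum_rev. apply rsum_ext; intros. f_equal. unfold dd. lia. }
    assert (E2 : rsum n (fun j => f (dd n j)) = rsum n (fun k => f (S k))).
    { rewrite <- rsum_rev. apply rsum_ext; intros. f_equal. unfold dd. lia. }
    assert (E3 : dd n n = 0%nat) by (unfold dd; lia).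
    rewrite E1, E2, E3.
    assert (E4 := rsum_shift n f). rewrite rsum_S in E4 |- *. rewrite S_INR.
    assert (0 <= INR n) by apply pos_INR. assert (0 <= f n) by apply Hf.
    nra.
Qed.

Lemma swap4 n m (F : nat -> nat -> nat -> nat -> R) :
  rsum n (fun j => rsum n (fun l => rsum m (fun i => rsum m (fun i' => F j l i i')))) =
  rsum m (fun i => rsum m (fun i' => rsum n (fun j => rsum n (fun l => F j l i i')))).
Proof.
  transitivity (rsum n (fun j => rsum m (fun i => rsum n (fun l => rsum m (fun i' => F j l i i'))))).
  { apply rsum_ext; intros i0 _. apply (rsum_swap n m (fun l i => rsum m (fun i' => F i0 l i i'))). }
  rewrite (rsum_swap n m (fun j i => rsum n (fun l => rsum m (fun i' => F j l i i')))).
  apply rsum_ext; intros i _.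
  transitivity (rsum n (fun j => rsum m (fun i' => rsum n (fun l => F j l i i')))).
  { apply rsum_ext; intros i0 _. apply (rsum_swap n m (fun l i' => F i0 l i i')). }
  apply (rsum_swap n m (fun j i' => rsum n (fun l => F j l i i'))).
Qed.

Lemma diag n F : (forall i j, (i < n)%nat -> (j < n)%nat -> 0 <= F i j) ->
  rsum n (fun i => F i i) <= rsum n (fun i => rsum n (fun j => F i j)).
Proof.
  intros H. apply rsum_le; intros i Hi.
  apply (rsum_term n (fun j => F i j)); auto.
Qed.

Lemma lower K n w t : (1 <= K)%nat -> (forall i, (i < K)%nat -> 0 <= w i) -> rsum K w = 1 ->
  rsum n (fun j => rsum n (fun l => (rsum K (fun i => w i * cos (INR (dd j l) * t i))) ^ 2))
  >= INR n ^ 2 / (2 * INR K).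
Proof.
  intros HK Hw Hs.
  set (c := fun i j => cos (INR j * t i)).
  set (s := fun i j => sin (INR j * t i)).
  set (Q := fun i i' => (rsum n (fun j => c i j * c i' j)) ^ 2 + (rsum n (fun j => c i j * s i' j)) ^ 2
     + (rsum n (fun j => s i j * c i' j)) ^ 2 + (rsum n (fun j => s i j * s i' j)) ^ 2).
  assert (E : rsum n (fun j => rsum n (fun l => (rsum K (fun i => w i * cos (INR (dd j l) * t i))) ^ 2))
     = rsum K (fun i => rsum K (fun i' => w i * w i' * Q i i'))).
  { transitivity (rsum n (fun j => rsum n (fun l => rsum K (fun i => rsum K (fun i' =>
       w i * w i' * ((c i j * c i' j) * (c i l * c i' l) + (c i j * s i' j) * (c i l * s i' l)
         + (s i j * c i' j) * (s i l * c i' l) + (s i j * s i' j) * (s i l * s i' l))))))).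
    { apply rsum_ext; intros j _. apply rsum_ext; intros l _. rewrite rsum_sq.
      apply rsum_ext; intros i _. apply rsum_ext; intros i' _.
      rewrite !cosd. unfold c, s. ring. }
    rewrite swap4. apply rsum_ext; intros i _. apply rsum_ext; intros i' _.
    transitivity (w i * w i' * rsum n (fun j => rsum n (fun l =>
         ((c i j * c i' j) * (c i l * c i' l) + (c i j * s i' j) * (c i l * s i' l)
         + (s i j * c i' j) * (s i l * c i' l) + (s i j * s i' j) * (s i l * s i' l))))).
    { rewrite <- rsum_scal. apply rsum_ext; intros j _.
      rewrite <- rsum_scal. apply rsum_ext; intros l _. reflexivity. }
    f_equal. unfold Q. rewrite !rsum_sq. rewrite <- !rsum_plus. apply rsum_ext; intros j _.
    rewrite <- !rsum_plus. reflexivity. }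
  rewrite E.
  assert (HKr : 0 < INR K) by (apply lt_0_INR; lia).
  assert (HQ : forall i, (i < K)%nat -> INR n ^ 2 / 2 <= Q i i).
  { intros i Hi. unfold Q.
    assert (Hn : rsum n (fun j => c i j * c i j) + rsum n (fun j => s i j * s i j) = INR n).
    { rewrite <- rsum_plus, <- (Rmult_1_r (INR n)), <- rsum_const. apply rsum_ext; intros i0 _.
      unfold c, s. rewrite <- (sin2_cos2 (INR i0 * t i)). unfold Rsqr. ring. }
    rewrite <- Hn.
    assert (0 <= (rsum n (fun j => c i j * s i j)) ^ 2) by apply pow2_ge_0.
    assert (0 <= (rsum n (fun j => s i j * c i j)) ^ 2) by apply pow2_ge_0.
    assert (H5 := pow2_ge_0 (rsum n (fun j => c i j * c i j) - rsum n (fun j => s i j * s i j))).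
    generalize dependent (rsum n (fun j => c i j * c i j)).
    generalize dependent (rsum n (fun j => s i j * s i j)). intros. nra. }
  apply Rle_ge. eapply Rle_trans; [| apply diag].
  2:{ intros i i' Hi Hi'. apply Rmult_le_pos; [apply Rmult_le_pos; auto|].
      unfold Q. assert (H1 := pow2_ge_0 (rsum n (fun j => c i j * c i' j))).
      assert (H2 := pow2_ge_0 (rsum n (fun j => c i j * s i' j))).
      assert (H3 := pow2_ge_0 (rsum n (fun j => s i j * c i' j))).
      assert (H4 := pow2_ge_0 (rsum n (fun j => s i j * s i' j))). lra. }
  eapply Rle_trans; [| apply (rsum_le K (fun i => w i ^ 2 * (INR n ^ 2 / 2)))].
  2:{ intros i Hi. replace (w i ^ 2) with (w i * w i) by ring. apply Rmult_le_compat_l; [nra | apply HQ; auto]. }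
  rewrite rsum_scalr.
  assert (Hc := cs K w ltac:(lia)). rewrite Hs in Hc.
  assert (0 <= INR n ^ 2) by apply pow2_ge_0.
  set (W := rsum K (fun i => w i ^ 2)) in *.
  assert (1 / INR K <= W).
  { apply (Rmult_le_reg_l (INR K)); auto. replace (INR K * (1 / INR K)) with 1 by (field; lra). lra. }
  replace (INR n ^ 2 / (2 * INR K)) with ((1 / INR K) * (INR n ^ 2 / 2)) by (field; lra).
  apply Rmult_le_compat_r; lra.
Qed.

Theorem mainTheorem12 (K L : nat) (x w : nat -> R) :
  (1 <= K)%nat ->
  (K < L)%nat ->
  (forall i, (i < K)%nat -> 0 <= x i <= 1) ->
  (forall i j, (i < K)%nat -> (j < K)%nat -> x i = x j -> i = j) ->
  (forall i, (i < K)%nat -> 0 < w i) ->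
  rsum K w = 1 ->
  rsum (2 * L - 2) (fun j => (expect K x w (shiftedCheb (S j))) ^ 2)
    >= (INR L - INR K) / (4 * INR L).
Proof.
  intros HK HL Hx Hinj Hw Hs.
  set (f := fun k => (expect K x w (shiftedCheb k)) ^ 2).
  change (rsum (2 * L - 2) (fun j => f (S j)) >= (INR L - INR K) / (4 * INR L)).
  assert (Hf0 : f 0%nat = 1).
  { unfold f, expect, shiftedCheb. rewrite (rsum_ext K _ w). rewrite Hs; ring.
    intros i _. simpl INR. rewrite Rmult_0_l, cos_0. ring. }
  assert (Hfnn : forall k, 0 <= f k) by (intros; apply pow2_ge_0).
  set (N := (2 * L - 1)%nat).
  assert (Hsh : rsum (2 * L - 2) (fun j => f (S j)) = rsum N f - f 0%nat).
  { replace N with (S (2 * L - 2)) by (unfold N; lia). rewrite rsum_shift. ring. }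
  rewrite Hsh, Hf0.
  assert (Hup := upper N f Hfnn). rewrite Hf0 in Hup.
  assert (Hlo := lower K N w (fun i => acos (2 * x i - 1)) HK
                   ltac:(intros i Hi; left; apply Hw; auto) Hs).
  change (rsum N (fun j => rsum N (fun l => f (dd j l))) >= INR N ^ 2 / (2 * INR K)) in Hlo.
  assert (HN : INR N = 2 * INR L - 1).
  { unfold N. rewrite minus_INR by lia. rewrite mult_INR. simpl. ring. }
  assert (HKr : 1 <= INR K) by (apply (le_INR 1); lia).
  assert (HLr : INR K + 1 <= INR L) by (rewrite <- S_INR; apply le_INR; lia).
  set (H := rsum N f) in *.
  set (SS := rsum N (fun j => rsum N (fun l => f (dd j l)))) in *.
  rewrite HN in Hup, Hlo.
  set (k := INR K) in *. set (l := INR L) in *.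
  assert (A : (2 * l - 1) ^ 2 <= 2 * k * ((2 * l - 1) * (2 * H - 1))).
  { assert (B : (2 * l - 1) ^ 2 / (2 * k) <= (2 * l - 1) * (2 * H - 1)) by lra.
    apply (Rmult_le_compat_l (2 * k)) in B; [|lra].
    replace (2 * k * ((2 * l - 1) ^ 2 / (2 * k))) with ((2 * l - 1) ^ 2) in B by (field; lra).
    exact B. }
  assert (C : 2 * l - 1 <= 2 * k * (2 * H - 1)).
  { apply (Rmult_le_reg_l (2 * l - 1)); [lra|]. nra. }
  apply Rle_ge.
  assert (D : k * (l - k) <= k * (4 * l * (H - 1))) by nra.
  assert (D2 : l - k <= 4 * l * (H - 1)) by (apply (Rmult_le_reg_l k); lra).
  unfold Rdiv. apply (Rmult_le_reg_l (4 * l)); [lra|].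
  replace (4 * l * ((l - k) * / (4 * l))) with (l - k) by (field; lra). lra.
Qed.
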